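(* Let $X$ and $Y$ be $\omega$ type $P$-spaces. Then the product topology of $\Sigma\mathcal O(X)$ and $\Sigma\mathcal O(Y)$ coincides with the Scott topology of the product poset $\mathcal O(X)\times\mathcal O(Y)$, i.e. $\Sigma\mathcal O(X)\times\Sigma\mathcal O(Y)=\Sigma(\mathcal O(X)\times\mathcal O(Y))$.
   Context: $\mathcal O(X)$ is the lattice of open subsets of $X$ ordered by inclusion; for a poset $L$, $\Sigma L$ denotes $L$ with the Scott topology (a set $U$ is Scott open iff it is an upper set and for every directed $D$ with existing supremum, $\bigvee D\in U$ implies $D\cap U\neq\emptyset$); $\mathcal O(X)\times\mathcal O(Y)$ has the coordinatewise order. A topological space is an $\omega$ type space if it has a subbase consisting of countable subsets. A space is a $P$-space if the intersection of any countable family of open sets is open. *)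

(* Defs.v *)
From HB Require Import structures.
From mathcomp Require Import all_boot all_order.
From mathcomp Require Import boolp classical_sets cardinality topology.

Set Implicit Arguments.
Unset Strict Implicit.
Unset Printing Implicit Defensive.

Local Open Scope classical_set_scope.

Definition opens (X : topologicalType) := {U : set X | open U}.

Definition opens_le (X : topologicalType) (U V : opens X) : Prop :=
  proj1_sig U `<=` proj1_sig V.

Definition prod_le (A B : Type) (leA : A -> A -> Prop) (leB : B -> B -> Prop)
  (p q : A * B) : Prop := leA p.1 q.1 /\ leB p.2 q.2.

Definition directed (T : Type) (le : T -> T -> Prop) (D : set T) : Prop :=
  (exists d, D d) /\
  (forall x y, D x -> D y -> exists z, [/\ D z, le x z & le y z]).

Definition is_sup (T : Type) (le : T -> T -> Prop) (D : set T) (s : T) : Prop :=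
  (forall d, D d -> le d s) /\ (forall u, (forall d, D d -> le d u) -> le s u).

Definition scott_open (T : Type) (le : T -> T -> Prop) (U : set T) : Prop :=
  (forall x y, U x -> le x y -> U y) /\
  (forall D s, directed le D -> is_sup le D s -> U s -> exists d, D d /\ U d).

Definition product_topology_on (A B : Type) (tA : set A -> Prop) (tB : set B -> Prop)
  (W : set (A * B)) : Prop :=
  forall p, W p -> exists U V, [/\ tA U, tB V, U p.1, V p.2 &
                                 forall a b, U a -> V b -> W (a, b)].

Definition is_subbase (X : topologicalType) (B : set (set X)) : Prop :=
  (forall S, B S -> open S) /\
  (forall U : set X, open U -> forall x, U x ->
     exists s : seq (set X), [/\ (forall S, S \in s -> B S),
        (forall S, S \in s -> S x) &
        (forall y, (forall S, S \in s -> S y) -> U y)]).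

Definition omega_type (X : topologicalType) : Prop :=
  exists B : set (set X), is_subbase B /\ (forall S, B S -> countable S).

Definition P_space (X : topologicalType) : Prop :=
  forall F : nat -> set X, (forall n, open (F n)) -> open (\bigcap_n F n).

(* Main.v *)
Require Import Defs.
From HB Require Import structures.
From mathcomp Require Import all_boot all_order.
From mathcomp Require Import boolp classical_sets cardinality topology.

Set Implicit Arguments.
Unset Strict Implicit.
Unset Printing Implicit Defensive.
Local Open Scope classical_set_scope.

Lemma alex (X : topologicalType) : omega_type X -> P_space X ->
  forall x : X, exists M : set X,
    [/\ open M, M x & forall U, open U -> U x -> M `<=` U].
Proof.
move=> [B [[Bo Bsub] Bc]] PX x.
case: (pselect (exists S, B S /\ S x)) => [[S0 [BS0 S0x]]|nS].
- have /countable_injP [f finj] := Bc _ BS0.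
  pose P n := exists S, [/\ B S, S x & exists y, [/\ S0 y, f y = n & ~ S y]].
  pose F n : set X := match pselect (P n) with
                        left h => proj1_sig (cid h) | right _ => setT end.
  have FP n : (open (F n) /\ F n x) /\
              (P n -> exists y, [/\ S0 y, f y = n & ~ F n y]).
    rewrite /F; case: pselect => [h|h].
      case: (cid h) => S [BS Sx Hy] /=; split => //; split => //; exact: Bo.
    split => //; split => //; exact: openT.
  exists (S0 `&` \bigcap_n F n); split.
  + apply: openI; first exact: Bo.
    by apply: PX => n; exact: (FP n).1.1.
  + by split => // n _; exact: (FP n).1.2.
  + move=> U oU Ux z [S0z Fz].
    have [s [sB sx sU]] := Bsub U oU x Ux.
    apply: sU => S Ss; apply: contrapT => nSz.
    have Pn : P (f z) by exists S; split; [exact: sB|exact: sx|exists z].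
    have [y [S0y fy nFy]] := (FP (f z)).2 Pn.
    have yz : y = z := finj _ _ (mem_set S0y) (mem_set S0z) fy.
    by subst y; apply: nFy; exact: Fz.
- exists setT; split => //; first exact: openT.
  move=> U oU Ux z _; have [s [sB sx sU]] := Bsub U oU x Ux.
  apply: sU => S Ss; exfalso; apply: nS; exists S; split; [exact: sB|exact: sx].
Qed.

Definition Kset (X : eqType) (M : X -> set X) (s : seq X) : set X :=
  \bigcup_(x in [set x | x \in s]) M x.

Definition Kopen (X : topologicalType) (M : X -> set X)
  (HMo : forall x, open (M x)) (s : seq X) : opens X :=
  exist _ (Kset M s) (bigcup_open (fun x _ => HMo x)).

Lemma up_scott (X : topologicalType) (M : X -> set X)
  (HM : forall x, [/\ open (M x), M x x & forall U, open U -> U x -> M x `<=` U])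
  (s : seq X) :
  scott_open (@opens_le X) [set U : opens X | Kset M s `<=` proj1_sig U].
Proof.
split.
  by move=> U V HU UV; exact: subset_trans HU UV.
move=> D S [[d0 Dd0] Ddir] [Sub Sleast] HS.
have SD : proj1_sig S `<=` \bigcup_(d in D) proj1_sig d.
  have := Sleast (exist _ _ (bigcup_open (fun (d : opens X) (_ : D d) => proj2_sig d))).
  apply => d Dd z dz; by exists d.
elim: s HS => [|x s IH] HS.
  by exists d0; split => // z [y].
have HS' : Kset M s `<=` proj1_sig S.
  by move=> z [y ys My]; apply: HS; exists y => //; rewrite /= in_cons ys orbT.
have [d [Dd Kd]] := IH HS'.
have [_ Mxx Mmin] := HM x.
have : proj1_sig S x by apply: HS; exists x => //; rewrite /= in_cons eqxx.
move=> /SD [e De ex].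
have [z [Dz dz ez]] := Ddir _ _ Dd De.
exists z; split => // w [y]; rewrite /= in_cons => /orP [/eqP ->|ys] Myw.
  by apply: ez; exact: (Mmin _ (proj2_sig e) ex _ Myw).
by apply: dz; apply: Kd; exists y.
Qed.

Lemma back (X Y : topologicalType) (MX : X -> set X) (MY : Y -> set Y)
  (HX : forall x, [/\ open (MX x), MX x x & forall U, open U -> U x -> MX x `<=` U])
  (HY : forall x, [/\ open (MY x), MY x x & forall U, open U -> U x -> MY x `<=` U])
  (W : set (opens X * opens Y)) :
  scott_open (prod_le (@opens_le X) (@opens_le Y)) W ->
  product_topology_on (scott_open (@opens_le X)) (scott_open (@opens_le Y)) W.
Proof.
move=> [Wup Wdir] [A B] WAB.
have HXo : forall x, open (MX x) by move=> x; case: (HX x).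
have HYo : forall x, open (MY x) by move=> x; case: (HY x).
have KA : forall s, (forall x, x \in s -> proj1_sig A x) -> Kset MX s `<=` proj1_sig A.
  move=> s sA z [y ys Myz]; have [_ _ Mmin] := HX y.
  exact: (Mmin _ (proj2_sig A) (sA _ ys) _ Myz).
have KB : forall s, (forall x, x \in s -> proj1_sig B x) -> Kset MY s `<=` proj1_sig B.
  move=> s sA z [y ys Myz]; have [_ _ Mmin] := HY y.
  exact: (Mmin _ (proj2_sig B) (sA _ ys) _ Myz).
pose D := [set q : opens X * opens Y | exists s t,
  [/\ (forall x, x \in s -> proj1_sig A x), (forall y, y \in t -> proj1_sig B y)
    & q = (Kopen HXo s, Kopen HYo t)]].
have Ddir : directed (prod_le (@opens_le X) (@opens_le Y)) D.
  split; first by exists (Kopen HXo [::], Kopen HYo [::]); exists [::], [::].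
  move=> q1 q2 [s1 [t1 [s1A t1B ->]]] [s2 [t2 [s2A t2B ->]]].
  exists (Kopen HXo (s1 ++ s2), Kopen HYo (t1 ++ t2)); split.
  - exists (s1 ++ s2), (t1 ++ t2); split => //.
      by move=> x; rewrite mem_cat => /orP [] ?; [apply: s1A|apply: s2A].
    by move=> x; rewrite mem_cat => /orP [] ?; [apply: t1B|apply: t2B].
  - by split => z [y ys Myz]; exists y => //; rewrite /= mem_cat ys.
  - by split => z [y ys Myz]; exists y => //; rewrite /= mem_cat ys orbT.
have Dsup : is_sup (prod_le (@opens_le X) (@opens_le Y)) D (A, B).
  split.
    by move=> d [s [t [sA tB ->]]]; split; [exact: KA|exact: KB].
  move=> u ub; split.
    move=> a Aa.
    have : D (Kopen HXo [:: a], Kopen HYo [::]).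
      by exists [:: a], [::]; split => // x; rewrite inE => /eqP ->.
    move=> /ub [H1 _]; apply: H1; exists a; first by rewrite /= inE.
    by case: (HX a).
  move=> b Bb.
  have : D (Kopen HXo [::], Kopen HYo [:: b]).
    by exists [::], [:: b]; split => // x; rewrite inE => /eqP ->.
  move=> /ub [_ H1]; apply: H1; exists b; first by rewrite /= inE.
  by case: (HY b).
have [d [[s [t [sA tB ->]]] Wd]] := Wdir D (A, B) Ddir Dsup WAB.
exists [set U : opens X | Kset MX s `<=` proj1_sig U],
       [set U : opens Y | Kset MY t `<=` proj1_sig U]; split.
- exact: up_scott.
- exact: up_scott.
- exact: KA.
- exact: KB.
- by move=> a b Ha Hb; apply: Wup Wd _; split.
Qed.

Lemma forth (X Y : topologicalType) (W : set (opens X * opens Y)) :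
  product_topology_on (scott_open (@opens_le X)) (scott_open (@opens_le Y)) W ->
  scott_open (prod_le (@opens_le X) (@opens_le Y)) W.
Proof.
move=> HW; split.
  move=> p q Wp [pq1 pq2].
  have [U [V [[Uup _] [Vup _] Up Vq HUV]]] := HW p Wp.
  by case: q pq1 pq2 => a b pq1 pq2; apply: HUV; [apply: Uup pq1|apply: Vup pq2].
move=> D s [[d0 Dd0] Ddir] [sub least] Ws.
have [U [V [[Uup Us] [Vup Vs] Us1 Vs2 HUV]]] := HW s Ws.
have D1dir : directed (@opens_le X) (fst @` D).
  split; first by exists d0.1; exists d0.
  move=> _ _ [p Dp <-] [q Dq <-].
  have [z [Dz [pz _] [qz _]]] := Ddir _ _ Dp Dq.
  by exists z.1; split => //; exists z.
have D2dir : directed (@opens_le Y) (snd @` D).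
  split; first by exists d0.2; exists d0.
  move=> _ _ [p Dp <-] [q Dq <-].
  have [z [Dz [_ pz] [_ qz]]] := Ddir _ _ Dp Dq.
  by exists z.2; split => //; exists z.
have D1sup : is_sup (@opens_le X) (fst @` D) s.1.
  split; first by move=> _ [p Dp <-]; case: (sub p Dp).
  move=> u ub; have : prod_le (@opens_le X) (@opens_le Y) s (u, s.2).
    apply: least => d Dd; split; first by apply: ub; exists d.
    by case: (sub d Dd).
  by case.
have D2sup : is_sup (@opens_le Y) (snd @` D) s.2.
  split; first by move=> _ [p Dp <-]; case: (sub p Dp).
  move=> u ub; have : prod_le (@opens_le X) (@opens_le Y) s (s.1, u).
    apply: least => d Dd; split; last by apply: ub; exists d.
    by case: (sub d Dd).
  by case.
have [_ [[p Dp <-] Up]] := Us _ _ D1dir D1sup Us1.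
have [_ [[q Dq <-] Vq]] := Vs _ _ D2dir D2sup Vs2.
have [z [Dz [pz _] [_ qz]]] := Ddir _ _ Dp Dq.
exists z; split => //.
by case: z Dz pz qz => a b Dz pz qz; apply: HUV; [apply: Uup pz|apply: Vup qz].
Qed.

Theorem theorem4p4 (X Y : topologicalType) :
  omega_type X -> P_space X -> omega_type Y -> P_space Y ->
  forall W : set (opens X * opens Y),
    product_topology_on (scott_open (@opens_le X)) (scott_open (@opens_le Y)) W <->
    scott_open (prod_le (@opens_le X) (@opens_le Y)) W.
Proof.
move=> oX pX oY pY W; split; first exact: forth.
have /choice [MX HX] := alex oX pX.
have /choice [MY HY] := alex oY pY.
exact: back HX HY W.
Qed.
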